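(* If the alphabet is countable, there exists a probability on sentences $\mu$ that is strongly Cournot, i.e. $\mu(\varphi)>0$ for every satisfiable sentence $\varphi$.
   Context: Setting: higher-order logic (Church's simple theory of types, without a description operator), with Henkin semantics; an alphabet is countable if its set of constants is countable. Sentences are closed terms of type $o$, $\mathcal S$ the set of sentences. A sentence is valid if true in every interpretation, satisfiable if true in some interpretation. A probability on sentences is a non-negative $\mu:\mathcal S\to\mathbb R$ with $\mu(\varphi)=1$ for valid $\varphi$ and $\mu(\varphi\vee\psi)=\mu(\varphi)+\mu(\psi)$ whenever $\neg(\varphi\wedge\psi)$ is valid. *)

(* Defs.v *)
From Stdlib Require Import Reals List.
Open Scope R_scope.
Set Implicit Arguments.

Inductive ty : Type :=
| Tind : ty
| To : ty
| Tarr : ty -> ty -> ty.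

Record alphabet : Type := Alphabet {
  const : Type;
  ctype : const -> ty
}.

Definition countable_alphabet (A : alphabet) : Prop :=
  exists f : const A -> nat, forall c d, f c = f d -> c = d.

Inductive var : list ty -> ty -> Type :=
| Vz : forall G t, var (t :: G) t
| Vs : forall G s t, var G t -> var (s :: G) t.

(* Intrinsically typed terms (no description operator).  Logical
   constants: negation, disjunction, universal quantifier Pi_a and
   equality Q_a at every type. *)
Inductive tm (A : alphabet) : list ty -> ty -> Type :=
| Var : forall G t, var G t -> tm A G t
| Cst : forall G (c : const A), tm A G (@ctype A c)
| App : forall G s t, tm A G (Tarr s t) -> tm A G s -> tm A G t
| Lam : forall G s t, tm A (s :: G) t -> tm A G (Tarr s t)
| LNeg : forall G, tm A G (Tarr To To)
| LOr : forall G, tm A G (Tarr To (Tarr To To))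
| LPi : forall G a, tm A G (Tarr (Tarr a To) To)
| LEq : forall G a, tm A G (Tarr a (Tarr a To)).

Definition sentence (A : alphabet) : Type := tm A nil To.

Definition sNeg A (p : sentence A) : sentence A := App (LNeg A nil) p.
Definition sOr A (p q : sentence A) : sentence A :=
  App (App (LOr A nil) p) q.
Definition sAnd A (p q : sentence A) : sentence A :=
  sNeg (sOr (sNeg p) (sNeg q)).

Definition env (D : ty -> Type) (G : list ty) : Type :=
  forall t, var G t -> D t.

Definition env_nil (D : ty -> Type) : env D nil :=
  fun t v =>
    match v in var G t' return match G with nil => D t' | _ => unit end with
    | Vz _ _ => tt
    | Vs _ _ => tt
    end.

Definition env_cons (D : ty -> Type) G s (d : D s) (r : env D G) : env D (s :: G) :=
  fun t v =>
    match v in var G' t'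
      return match G' with
             | nil => unit
             | s' :: G0 => D s' -> env D G0 -> D t'
             end with
    | Vz _ _ => fun d _ => d
    | @Vs _ _ _ v' => fun _ r => r _ v'
    end d r.

(* Henkin general models: an extensional frame (D_iota nonempty, D_o the
   two truth values, D_(a->b) a set of functions from D_a to D_b via
   [app]), an interpretation of the constants, and a denotation function
   defined on every term (comprehension), respecting the logical
   constants. *)
Record model (A : alphabet) : Type := Model {
  D : ty -> Type;
  app : forall a b, D (Tarr a b) -> D a -> D b;
  app_ext : forall a b (f g : D (Tarr a b)),
      (forall x, app f x = app g x) -> f = g;
  ind_ne : inhabited (D Tind);
  truth : D To -> bool;
  truth_inj : forall x y, truth x = truth y -> x = y;
  truth_surj : forall b, exists x, truth x = b;
  interp : forall c : const A, D (@ctype A c);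
  eval : forall G t, tm A G t -> env D G -> D t;
  eval_var : forall G t (v : var G t) r, eval (Var A v) r = r t v;
  eval_cst : forall G c r, eval (Cst A G c) r = interp c;
  eval_app : forall G s t (f : tm A G (Tarr s t)) (x : tm A G s) r,
      eval (App f x) r = app (eval f r) (eval x r);
  eval_lam : forall G s t (b : tm A (s :: G) t) r d,
      app (eval (Lam b) r) d = eval b (env_cons d r);
  eval_neg : forall G r p,
      truth (app (eval (LNeg A G) r) p) = negb (truth p);
  eval_or : forall G r p q,
      truth (app (app (eval (LOr A G) r) p) q) = orb (truth p) (truth q);
  eval_pi : forall G a r f,
      truth (app (eval (LPi A G a) r) f) = true <->
      (forall x, truth (app f x) = true);
  eval_eq : forall G a r x y,
      truth (app (app (eval (LEq A G a) r) x) y) = true <-> x = y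
}.

Definition true_in A (M : model A) (p : sentence A) : Prop :=
  truth M (eval M p (env_nil (D M))) = true.

Definition valid A (p : sentence A) : Prop := forall M : model A, true_in M p.
Definition satisfiable A (p : sentence A) : Prop := exists M : model A, true_in M p.

Definition probability A (mu : sentence A -> R) : Prop :=
  (forall p, 0 <= mu p) /\
  (forall p, valid p -> mu p = 1) /\
  (forall p q, valid (sNeg (sAnd p q)) -> mu (sOr p q) = mu p + mu q).

Definition strongly_cournot A (mu : sentence A -> R) : Prop :=
  forall p, satisfiable p -> 0 < mu p.

(* Main.v *)
Require Import Defs.
From Stdlib Require Import Reals List Arith Cantor Program.Equality ClassicalEpsilon FunctionalExtensionality.
From Coquelicot Require Import Coquelicot.
From Stdlib Require Import Lra.
Set Implicit Arguments.
Open Scope nat_scope.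
Unset Asymmetric Patterns.

Fixpoint encT (t : ty) : nat :=
  match t with
  | Tind => to_nat (0, 0)
  | To => to_nat (1, 0)
  | Tarr a b => to_nat (2, to_nat (encT a, encT b))
  end.

Lemma to_nat_inj a b c d : to_nat (a, b) = to_nat (c, d) -> a = c /\ b = d.
Proof. intro H. pose proof (f_equal of_nat H) as H'. rewrite !cancel_of_to in H'. now inversion H'. Qed.

Lemma encT_inj : forall t u, encT t = encT u -> t = u.
Proof.
  induction t; destruct u; cbn [encT]; intro H; apply to_nat_inj in H; destruct H as [H1 H2];
    try discriminate; auto.
  apply to_nat_inj in H2; destruct H2. f_equal; auto.
Qed.

Fixpoint encV G t (v : Defs.var G t) : nat :=
  match v with Vz _ _ => 0 | Vs _ v' => S (encV v') end.

Lemma encV_inj G t (v w : Defs.var G t) : encV v = encV w -> v = w.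
Proof.
  induction v; dependent destruction w; simpl; intro H; try discriminate; auto.
  f_equal; auto.
Qed.

Lemma encV_inj' G t (v : Defs.var G t) : forall t' (w : Defs.var G t'), encV v = encV w -> existT (Defs.var G) t v = existT (Defs.var G) t' w.
Proof.
  induction v; intros t' w; dependent destruction w; simpl; intro H; try discriminate; auto.
  injection H; intro H'. specialize (IHv _ _ H').
  pose proof (f_equal (@projT1 _ _) IHv) as E. cbn in E. subst.
  apply Eqdep.EqdepTheory.inj_pair2 in IHv. subst. reflexivity.
Qed.

Section E.
Variable A : alphabet.
Variable f : const A -> nat.
Hypothesis finj : forall c d, f c = f d -> c = d.

Fixpoint enc G t (e : tm A G t) : nat :=
  match e with
  | Defs.Var _ v => to_nat (0, encV v)
  | Defs.Cst _ _ c => to_nat (1, f c)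
  | @Defs.App _ _ s _ a b => to_nat (2, to_nat (encT s, to_nat (enc a, enc b)))
  | @Defs.Lam _ _ s _ b => to_nat (3, to_nat (encT s, enc b))
  | LNeg _ _ => to_nat (4, 0)
  | LOr _ _ => to_nat (5, 0)
  | LPi _ _ a => to_nat (6, encT a)
  | LEq _ _ a => to_nat (7, encT a)
  end.

Lemma enc_inj' G t (e1 : tm A G t) : forall t' (e2 : tm A G t'),
  enc e1 = enc e2 -> existT (tm A G) t e1 = existT (tm A G) t' e2.
Proof.
  induction e1; intros t' e2; dependent destruction e2; cbn [enc]; intro H; apply to_nat_inj in H;
    destruct H as [H1 H2]; try discriminate.
  - apply encV_inj' in H2. pose proof (f_equal (@projT1 _ _) H2) as E. cbn in E. subst.
    apply Eqdep.EqdepTheory.inj_pair2 in H2. subst. reflexivity.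
  - apply finj in H2. subst. reflexivity.
  - apply to_nat_inj in H2. destruct H2 as [H2 H3]. apply to_nat_inj in H3. destruct H3 as [H3 H4].
    apply encT_inj in H2. subst.
    specialize (IHe1_1 _ _ H3). specialize (IHe1_2 _ _ H4).
    pose proof (f_equal (@projT1 _ _) IHe1_1) as E. cbn in E. injection E; intros; subst.
    apply Eqdep.EqdepTheory.inj_pair2 in IHe1_1. apply Eqdep.EqdepTheory.inj_pair2 in IHe1_2.
    subst. reflexivity.
  - apply to_nat_inj in H2. destruct H2 as [H2 H3]. apply encT_inj in H2. subst.
    specialize (IHe1 _ _ H3). 
    pose proof (f_equal (@projT1 _ _) IHe1) as E. cbn in E. subst.
    apply Eqdep.EqdepTheory.inj_pair2 in IHe1. subst. reflexivity.
  - reflexivity.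
  - reflexivity.
  - apply encT_inj in H2. subst. reflexivity.
  - apply encT_inj in H2. subst. reflexivity.
Qed.

Lemma enc_inj (e1 e2 : sentence A) : enc e1 = enc e2 -> e1 = e2.
Proof. intro H. apply enc_inj' in H. apply Eqdep.EqdepTheory.inj_pair2 in H. exact H. Qed.
End E.

Fixpoint SD (t : ty) : Type :=
  match t with Tind => unit | To => bool | Tarr a b => SD a -> SD b end.

Fixpoint inh (t : ty) : SD t :=
  match t return SD t with Tind => tt | To => true | Tarr a b => fun _ => inh b end.

Definition bP (P : Prop) : bool := if excluded_middle_informative P then true else false.

Lemma bP_true P : bP P = true <-> P.
Proof. unfold bP; destruct (excluded_middle_informative P); split; congruence || tauto. Qed.

Section M.
Variable A : alphabet.

Fixpoint sev G t (e : tm A G t) : env SD G -> SD t :=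
  match e in tm _ G t return env SD G -> SD t with
  | Defs.Var _ v => fun r => r _ v
  | Defs.Cst _ _ c => fun _ => inh (ctype A c)
  | Defs.App a b => fun r => (sev a r) (sev b r)
  | Defs.Lam b => fun r d => sev b (env_cons d r)
  | LNeg _ _ => fun _ => negb
  | LOr _ _ => fun _ => orb
  | LPi _ _ a => fun _ (f : SD a -> bool) => bP (forall x, f x = true)
  | LEq _ _ a => fun _ (x y : SD a) => bP (x = y)
  end.

Definition smodel : model A.
Proof.
  refine (@Model A SD (fun a b (f : SD (Tarr a b)) x => f x) _ (inhabits tt)
    (fun b : SD To => b) _ _ (fun c => inh (ctype A c)) sev _ _ _ _ _ _ _ _).
  - intros a b f g H. apply functional_extensionality. exact H.
  - auto.
  - intro b; exists b; reflexivity.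
  - reflexivity.
  - reflexivity.
  - reflexivity.
  - reflexivity.
  - reflexivity.
  - reflexivity.
  - intros. cbn. apply bP_true.
  - intros. cbn. apply bP_true.
Defined.
End M.

Open Scope R_scope.

Lemma eval_sOr A (M : model A) (p q : sentence A) r :
  truth M (eval M (sOr p q) r) = orb (truth M (eval M p r)) (truth M (eval M q r)).
Proof. unfold sOr. rewrite !eval_app. apply eval_or. Qed.

Lemma eval_sNeg A (M : model A) (p : sentence A) r :
  truth M (eval M (sNeg p) r) = negb (truth M (eval M p r)).
Proof. unfold sNeg. rewrite !eval_app. apply eval_neg. Qed.

Definition ind A (M : model A) (p : sentence A) : R :=
  if truth M (eval M p (env_nil (Defs.D M))) then 1 else 0.

Lemma geom_ex : ex_series (fun n => (/2)^n).
Proof. eexists. apply is_series_geom. rewrite Rabs_pos_eq; lra. Qed.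

Lemma geom_val : Series (fun n => (/2)^n) = 2.
Proof. apply is_series_unique. 
  assert (H : Rabs (/2) < 1) by (rewrite Rabs_pos_eq; lra).
  pose proof (is_series_geom (/2) H) as H'.
  replace (/(1 - /2)) with 2 in H' by field. exact H'. Qed.

Lemma ind_bounds A (M : model A) p : 0 <= ind M p <= 1.
Proof. unfold ind; destruct (truth _ _); lra. Qed.

Lemma term_ex (a : nat -> R) : (forall n, 0 <= a n <= 1) -> ex_series (fun n => (/2)^n * a n).
Proof.
  intro H. apply (@ex_series_le R_AbsRing R_CompleteNormedModule _ (fun n => (/2)^n)); [|apply geom_ex].
  intro n. change (Rabs ((/2)^n * a n) <= (/2)^n).
  specialize (H n). pose proof (pow_le (/2) n ltac:(lra)).
  rewrite Rabs_pos_eq by nra. nra.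
Qed.

Lemma Series_nonneg (a : nat -> R) : (forall n, 0 <= a n) -> ex_series a -> 0 <= Series a.
Proof.
  intros H Hex. assert (E : Series (fun n => 0 * a n) = 0).
  { rewrite Series_scal_l. ring. }
  rewrite <- E. apply Series_le; auto. intro n; specialize (H n); lra.
Qed.

Lemma sum_ge_last (a : nat -> R) k : (forall n, 0 <= a n) -> a k <= sum_f_R0 a k.
Proof.
  intro H. destruct k; simpl. lra.
  pose proof (cond_pos_sum a k H). lra.
Qed.

Lemma Series_pos (a : nat -> R) k : (forall n, 0 <= a n) -> ex_series a -> 0 < a k -> 0 < Series a.
Proof.
  intros H Hex Hk. rewrite (Series_incr_n a (S k)) by (auto with arith).
  simpl Init.Nat.pred. pose proof (sum_ge_last a k H).
  assert (0 <= Series (fun j => a (S k + j)%nat)).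
  { apply Series_nonneg. intro; apply H.
    apply (@ex_series_le R_AbsRing R_CompleteNormedModule _ (fun j => a (S k + j)%nat)).
    - intro n. change (Rabs (a (S k + n)%nat) <= a (S k + n)%nat). rewrite Rabs_pos_eq; auto; lra.
    - apply (ex_series_incr_n a (S k)). exact Hex. }
  lra.
Qed.

Theorem mainTheorem15 (A : alphabet) :
  countable_alphabet A ->
  exists mu : sentence A -> R, probability mu /\ strongly_cournot mu.
Proof.
  intros [f finj].
  pose (Mn := fun n : nat => epsilon (inhabits (smodel A))
    (fun M => forall p : sentence A, enc f p = n -> satisfiable p -> true_in M p)).
  pose (term := fun (p : sentence A) n => (/2)^n * ind (Mn n) p).
  assert (Hex : forall p, ex_series (term p)).
  { intro p. apply term_ex. intro; apply ind_bounds. }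
  exists (fun p => /2 * Series (term p)).
  split; [split; [|split]|].
  - intro p. assert (0 <= Series (term p)); [|lra].
    apply Series_nonneg; auto. intro n. unfold term. pose proof (ind_bounds (Mn n) p).
    pose proof (pow_le (/2) n ltac:(lra)). nra.
  - intros p Hv. rewrite (Series_ext _ (fun n => (/2)^n)). rewrite geom_val; lra.
    intro n. unfold term, ind. rewrite (Hv (Mn n)). ring.
  - intros p q Hv. rewrite (Series_ext _ (fun n => term p n + term q n)).
    rewrite Series_plus by auto. ring.
    intro n. unfold term, ind. specialize (Hv (Mn n)). unfold true_in, sAnd in Hv.
    rewrite !eval_sNeg, eval_sOr, !eval_sNeg in Hv. rewrite eval_sOr.
    destruct (truth _ (eval _ p _)), (truth _ (eval _ q _)); simpl in *; try discriminate; ring.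
  - intros p Hs. assert (0 < Series (term p)); [|lra].
    apply (@Series_pos _ (enc f p)); auto.
    + intro n. unfold term. pose proof (ind_bounds (Mn n) p).
      pose proof (pow_le (/2) n ltac:(lra)). nra.
    + unfold term. assert (Ht : true_in (Mn (enc f p)) p).
      { unfold Mn.
        refine (epsilon_spec (inhabits (smodel A)) (fun M => forall p0 : sentence A, enc f p0 = enc f p -> satisfiable p0 -> true_in M p0) _ p eq_refl Hs).
        destruct Hs as [M HM]. exists M. intros p' He _.
        apply (@enc_inj A f finj) in He. subst; exact HM. }
      unfold ind. unfold true_in in Ht. rewrite Ht. rewrite Rmult_1_r.
      apply pow_lt. lra.
Qed.
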